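(* Fix $\beta>0$ and a transient MDP with a sink state as in the context. There exists $\pi^\star\in\Pi_{\mathrm{SD}}$ such that $\bm v^{\infty,\star}=\bm v^{\infty}(\pi^\star)$ and \[ g^\star_\infty(\beta)=\mathrm{ERM}^{\bm\mu}_\beta\big[v^{\infty,\star}_{\tilde s_0}\big]=\max_{\pi\in\Pi_{\mathrm{SD}}}\mathrm{ERM}^{\bm\mu}_\beta\big[v^{\infty}_{\tilde s_0}(\pi)\big], \] where $\tilde s_0\sim\mu$ (quantities may take the value $-\infty$).
   Context: MDP: states $\bar{\mathcal S}=\{1,\dots,S,S+1\}$, $e:=S+1$ a sink state, $\mathcal S=\{1,\dots,S\}$; finite actions $\mathcal A$; transitions $p(s,a,s')$, real rewards $r(s,a,s')$ of arbitrary sign; $p(e,a,e)=1$, $r(e,a,e)=0$; initial distribution $\mu$ on $\mathcal S$ (never starting at $e$) with $\mu>0$ componentwise. Policy classes: $\Pi_{\mathrm{HR}}$ (history-dependent randomized), $\Pi_{\mathrm{MD}}$ (Markov deterministic), $\Pi_{\mathrm{SD}}$ (stationary deterministic). Transience (standing assumption): for every $\pi\in\Pi_{\mathrm{SD}}$, $\sum_{t\ge0}\mathbb P^{\pi,s}[\tilde s_t=s']<\infty$ for all $s,s'\in\mathcal S$. $\mathrm{ERM}_\beta[\tilde x]=-\beta^{-1}\log\mathbb E[e^{-\beta\tilde x}]$. Define $v^t_s(\pi)=\mathrm{ERM}^{\pi,s}_\beta[\sum_{k=0}^{t-1}r(\tilde s_k,\tilde a_k,\tilde s_{k+1})]$,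 $v^{t,\star}_s=\max_{\pi\in\Pi_{\mathrm{MD}}}v^t_s(\pi)$, $\bm v^\infty(\pi)=\liminf_t\bm v^t(\pi)$, $\bm v^{\infty,\star}=\liminf_t\bm v^{t,\star}$. Define $g_t(\pi,\beta)=\mathrm{ERM}^{\pi,\mu}_\beta[\sum_{k=0}^{t}r(\tilde s_k,\tilde a_k,\tilde s_{k+1})]$ (initial state drawn from $\mu$), $g^\star_t(\beta)=\sup_{\pi\in\Pi_{\mathrm{HR}}}g_t(\pi,\beta)$, $g^\star_\infty(\beta)=\liminf_{t\to\infty}g^\star_t(\beta)$. For a vector $\bm v$, $\mathrm{ERM}^{\mu}_\beta[v_{\tilde s_0}]=-\beta^{-1}\log\sum_s\mu_s e^{-\beta v_s}$. *)

(* Defs.v *)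
From HB Require Import structures.
From mathcomp Require Import all_boot all_order all_algebra.
From mathcomp Require Import all_classical all_reals all_analysis.
Set Implicit Arguments.
Unset Strict Implicit.
Unset Printing Implicit Defensive.
Import Order.TTheory GRing.Theory Num.Theory.
Local Open Scope ring_scope.
Local Open Scope classical_set_scope.

(* States \bar S = {1,..,S,S+1} are encoded as 'I_S.+1 = {0,..,S};
   the sink state e = S+1 is encoded as ord_max (value S). *)
Definition state (S : nat) := 'I_S.+1.
Definition sink (S : nat) : state S := ord_max.

Section MDP.
Variables (R : realType) (S : nat) (A : finType).
Variables (p : state S -> A -> state S -> R) (r : state S -> A -> state S -> R).

(* History-dependent randomized policy: given the past history
   [(s_0,a_0);...;(s_{t-1},a_{t-1})] and the current state s_t,
   a distribution over actions. *)
Definition hr_policy := seq (state S * A) -> state S -> A -> R.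

Definition is_HR (pi : hr_policy) : Prop :=
  (forall h s a, 0 <= pi h s a) /\ (forall h s, \sum_(a : A) pi h s a = 1).

Definition md_policy (d : nat -> state S -> A) : hr_policy :=
  fun h s a => (a == d (size h) s)%:R.

Definition sd_policy (d : {ffun state S -> A}) : hr_policy :=
  fun h s a => (a == d s)%:R.

Definition hist T (x : {ffun 'I_T.+1 -> state S}) (a : {ffun 'I_T -> A})
  (k : 'I_T) : seq (state S * A) :=
  [seq (x (widen_ord (leqnSn T) i), a i) | i : 'I_T <- enum 'I_T & (val i < val k)%N].

Definition traj_prob (nu : state S -> R) (pi : hr_policy) (T : nat)
  (x : {ffun 'I_T.+1 -> state S}) (a : {ffun 'I_T -> A}) : R :=
  nu (x ord0) *
  \prod_(k < T) (pi (hist x a k) (x (widen_ord (leqnSn T) k)) (a k)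
                 * p (x (widen_ord (leqnSn T) k)) (a k) (x (lift ord0 k))).

Definition Exp (nu : state S -> R) (pi : hr_policy) (T : nat)
  (f : {ffun 'I_T.+1 -> state S} -> {ffun 'I_T -> A} -> R) : R :=
  \sum_(x : {ffun 'I_T.+1 -> state S}) \sum_(a : {ffun 'I_T -> A})
     traj_prob nu pi x a * f x a.

Definition ret T (x : {ffun 'I_T.+1 -> state S}) (a : {ffun 'I_T -> A}) : R :=
  \sum_(k < T) r (x (widen_ord (leqnSn T) k)) (a k) (x (lift ord0 k)).

Definition ERM_ret (beta : R) (nu : state S -> R) (pi : hr_policy) (T : nat) : R :=
  - beta^-1 * ln (Exp nu pi (T:=T) (fun x a => expR (- beta * ret x a))).

Definition dirac (s : state S) : state S -> R := fun s' => (s' == s)%:R.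

Definition v_t (beta : R) (t : nat) (pi : hr_policy) (s : state S) : R :=
  ERM_ret beta (dirac s) pi t.

Definition v_t_star (beta : R) (t : nat) (s : state S) : \bar R :=
  ereal_sup (range (fun d : nat -> state S -> A => (v_t beta t (md_policy d) s)%:E)).

Definition v_inf (beta : R) (pi : hr_policy) (s : state S) : \bar R :=
  limn_einf (fun t => (v_t beta t pi s)%:E).
Definition v_inf_star (beta : R) (s : state S) : \bar R :=
  limn_einf (fun t => v_t_star beta t s).

(* g_t(pi,beta): ERM of sum_{k=0}^{t} r(...), i.e. horizon t+1, s_0 ~ mu *)
Definition g_t (mu : state S -> R) (beta : R) (t : nat) (pi : hr_policy) : R :=
  ERM_ret beta mu pi t.+1.
Definition g_t_star (mu : state S -> R) (beta : R) (t : nat) : \bar R :=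
  ereal_sup [set (g_t mu beta t pi)%:E | pi in [set pi | is_HR pi]].
Definition g_inf_star (mu : state S -> R) (beta : R) : \bar R :=
  limn_einf (fun t => g_t_star mu beta t).

Definition ERM_mu (mu : state S -> R) (beta : R) (v : state S -> \bar R) : \bar R :=
  ((- beta^-1)%:E *
    lne (\sum_(s : state S | s != sink S) (mu s)%:E * expeR ((- beta)%:E * v s)))%E.

Definition transient : Prop :=
  forall (d : {ffun state S -> A}) (s s' : state S),
    s != sink S -> s' != sink S ->
    (\sum_(0 <= t <oo)
       (Exp (dirac s) (sd_policy d) (T:=t) (fun x _ => (x ord_max == s')%:R) : R)%:E
     < +oo)%E.

End MDP.

(* Main.v *)
Require Import Defs.
From HB Require Import structures.
From mathcomp Require Import all_boot all_order all_algebra.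
From mathcomp Require Import all_classical all_reals all_analysis.
From mathcomp Require Import ring lra.
Import Order.TTheory GRing.Theory Num.Theory.
Local Open Scope ring_scope.

Section AllHelpers.
Local Set Implicit Arguments. Local Unset Strict Implicit. Local Unset Printing Implicit Defensive.
Import numFieldNormedType.Exports.
Local Open Scope classical_set_scope.

Section Ext.
Variable X : finType.
Definition extf n (x : {ffun 'I_n -> X}) (y : X) : {ffun 'I_n.+1 -> X} :=
  [ffun i => if unlift ord_max i is Some j then x j else y].
Lemma extf_widen n x y (j : 'I_n) : extf x y (widen_ord (leqnSn n) j) = x j.
Proof.
rewrite ffunE.
have -> : widen_ord (leqnSn n) j = lift ord_max j by apply: ord_inj; rewrite lift_max.
by rewrite liftK.
Qed.
Lemma extf_max n x y : extf (n:=n) x y ord_max = y.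
Proof. by rewrite ffunE unlift_none. Qed.
Lemma extf_val n x y (i : 'I_n.+1) (j : 'I_n) : val i = val j -> extf x y i = x j.
Proof. move=> h; have -> : i = widen_ord (leqnSn n) j by apply: val_inj. exact: extf_widen. Qed.
Lemma extf_valmax n x y (i : 'I_n.+1) : val i = n -> extf x y i = y.
Proof. move=> h; have -> : i = ord_max by apply: val_inj. exact: extf_max. Qed.

Lemma sum_extf (V : nmodType) n (F : {ffun 'I_n.+1 -> X} -> V) :
  \sum_x F x = \sum_(x : {ffun 'I_n -> X}) \sum_(y : X) F (extf x y).
Proof.
rewrite pair_big /= (reindex (fun p : {ffun 'I_n -> X} * X => extf p.1 p.2)) //=.
exists (fun x' => ([ffun j => x' (widen_ord (leqnSn n) j)], x' ord_max)).
- move=> [x y] _ /=; congr pair; last by rewrite extf_max.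
  by apply/ffunP => j; rewrite ffunE extf_widen.
- move=> x' _; apply/ffunP => i; rewrite ffunE; case: unliftP => [j ->|->] //.
  rewrite ffunE; congr (x' _); apply: ord_inj; by rewrite lift_max.
Qed.

Lemma sum_ffun0 (V : nmodType) (F : {ffun 'I_0 -> X} -> V) (x0 : {ffun 'I_0 -> X}) :
  \sum_x F x = F x0.
Proof.
rewrite (big_pred1 x0) // => x /=; symmetry; apply/eqP/ffunP => -[] //.
Qed.
Definition ff0 : {ffun 'I_0 -> X} := [ffun i : 'I_0 => False_rect X (notF (ltn_ord i))].
End Ext.


Section MDP1.
Variables (R : realType) (S : nat) (A : finType).
Variables (p r : state S -> A -> state S -> R).
Local Notation st := (state S).

Definition fullh T (x : {ffun 'I_T.+1 -> st}) (a : {ffun 'I_T -> A}) : seq (st * A) :=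
  [seq (x (widen_ord (leqnSn T) i), a i) | i <- enum 'I_T].

Lemma hist_ext_widen T x y a b (k : 'I_T) :
  hist (extf x y) (extf a b) (widen_ord (leqnSn T) k) = hist (S:=S) (A:=A) x a k.
Proof.
rewrite /hist enum_ordSr filter_rcons /=.
have -> : (T < k)%N = false by apply/negbTE; rewrite -leqNgt ltnW.
rewrite filter_map -map_comp; congr map.
- by apply: funext => i /=; rewrite !extf_widen.
Qed.

Lemma hist_ext_max T x y a b :
  hist (extf x y) (extf a b) ord_max = fullh (T:=T) x a.
Proof.
rewrite /hist /fullh enum_ordSr filter_rcons /= ltnn filter_map -map_comp.
rewrite (@eq_filter _ _ predT) ?filter_predT; last by move=> i /=; rewrite ltn_ord.
by congr map; apply: funext => i /=; rewrite !extf_widen.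
Qed.

Lemma traj_ext nu pi T x y a b :
  traj_prob p nu pi (T:=T.+1) (extf x y) (extf a b) =
  traj_prob p nu pi x a * (pi (fullh x a) (x ord_max) b * p (x ord_max) b y).
Proof.
rewrite /traj_prob big_ord_recr /= (@extf_val _ _ _ _ _ ord0) //.
rewrite hist_ext_max extf_widen extf_max (@extf_valmax _ _ _ _ (lift ord0 ord_max)) //.
rewrite -mulrA; congr (_ * (_ * _)).
apply: eq_bigr => k _; rewrite hist_ext_widen !extf_widen.
by rewrite (@extf_val _ _ _ _ _ (lift ord0 k)).
Qed.

Lemma ret_ext T x y a b :
  ret r (T:=T.+1) (extf x y) (extf a b) = ret r x a + r (x ord_max) b y.
Proof.
rewrite /ret big_ord_recr /= extf_widen extf_max (@extf_valmax _ _ _ _ (lift ord0 ord_max)) //.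
congr (_ + _); apply: eq_bigr => k _; rewrite !extf_widen.
by rewrite (@extf_val _ _ _ _ _ (lift ord0 k)).
Qed.

Definition Kc (c : R) b s y := p s b y * expR (- c * r s b y).
Definition Hc (c : R) nu pi T (g : st -> R) :=
  Exp p nu pi (T:=T) (fun x a => expR (- c * ret r x a) * g (x ord_max)).

Lemma Hc_rec c nu pi T g :
  Hc c nu pi T.+1 g = Exp p nu pi (T:=T) (fun x a => expR (- c * ret r x a) *
     \sum_b pi (fullh x a) (x ord_max) b * \sum_y Kc c b (x ord_max) y * g y).
Proof.
rewrite /Hc /Exp sum_extf; apply: eq_bigr => x _.
rewrite exchange_big sum_extf; apply: eq_bigr => a _ /=.
set E := expR (- c * ret r x a); rewrite !mulr_sumr; apply: eq_bigr => b _.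
rewrite !mulr_sumr; apply: eq_bigr => y _.
rewrite traj_ext ret_ext extf_max /Kc mulrDr expRD /E; ring.
Qed.

Lemma Hc_0 c nu pi g : Hc c nu pi 0 g = \sum_s nu s * g s.
Proof.
rewrite /Hc /Exp sum_extf (sum_ffun0 _ (ff0 _)); apply: eq_bigr => s _.
rewrite (sum_ffun0 _ (ff0 _)) /traj_prob /ret !big_ord0 mulr0 expR0 mulr1 mul1r.
by rewrite extf_max (@extf_valmax _ _ _ _ ord0).
Qed.

Lemma sum_sel (I : finType) (b0 : I) (F : I -> R) : \sum_b (b == b0)%:R * F b = F b0.
Proof.
rewrite (bigD1 b0) //= eqxx mul1r big1 ?addr0 // => b /negbTE ->; by rewrite mul0r.
Qed.

Lemma size_hist T x a (k : 'I_T) : size (hist (S:=S) (A:=A) (T:=T) x a k) = k.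
Proof.
rewrite /hist size_map size_filter.
have -> : count (fun i : 'I_T => (i < k)%N) (enum 'I_T) =
  count (fun n => (n < 0 + k)%N) (map val (enum 'I_T)) by rewrite count_map.
by rewrite val_enum_ord -size_filter filter_iota_ltn ?size_iota // ltnW.
Qed.

Lemma size_fullh T x a : size (fullh (T:=T) x a) = T.
Proof. by rewrite /fullh size_map size_enum_ord. Qed.

Lemma Exp_ext nu pi1 pi2 T f :
  (forall x a (k : 'I_T), pi1 (hist x a k) = pi2 (hist x a k)) ->
  Exp p nu pi1 (T:=T) f = Exp p nu pi2 (T:=T) f.
Proof.
move=> h; apply: eq_bigr => x _; apply: eq_bigr => a _; congr (_ * _).
rewrite /traj_prob; congr (_ * _); apply: eq_bigr => k _; by rewrite h.
Qed.

Lemma Exp_eqf nu pi T (f1 f2 : {ffun 'I_T.+1 -> st} -> {ffun 'I_T -> A} -> R) :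
  (forall x a, f1 x a = f2 x a) -> Exp p nu pi (T:=T) f1 = Exp p nu pi (T:=T) f2.
Proof. by move=> h; apply: eq_bigr => x _; apply: eq_bigr => a _; rewrite h. Qed.

Lemma Exp_le nu pi T (f1 f2 : {ffun 'I_T.+1 -> st} -> {ffun 'I_T -> A} -> R) :
  (forall x a, 0 <= traj_prob p nu pi (T:=T) x a) -> (forall x a, f1 x a <= f2 x a) ->
  Exp p nu pi (T:=T) f1 <= Exp p nu pi (T:=T) f2.
Proof.
move=> h0 h; apply: ler_sum => x _; apply: ler_sum => a _; exact: ler_wpM2l.
Qed.

Lemma tp_ge0 nu pi T x a : (forall s, 0 <= nu s) -> (forall h s b, 0 <= pi h s b) ->
  (forall s b y, 0 <= p s b y) -> 0 <= traj_prob p nu pi (T:=T) x a.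
Proof.
move=> hnu hpi hp; apply: mulr_ge0 => //; apply: prodr_ge0 => k _; exact: mulr_ge0.
Qed.

Variable a0 : A.
Definition Qc c (g : st -> R) s b := \sum_y Kc c b s y * g y.
Definition amin c g s := Order.arg_min a0 xpredT (Qc c g s).
Definition Tb c g s := Qc c g s (amin c g s).
Definition Td c (d : st -> A) g s := Qc c g s (d s).

Lemma amin_le c g s b : Tb c g s <= Qc c g s b.
Proof. rewrite /Tb /amin; case: arg_minP => // i _ H; exact: H. Qed.

Lemma HR_lower c nu pi T g : (forall s, 0 <= nu s) -> is_HR pi ->
  (forall s b y, 0 <= p s b y) ->
  \sum_s nu s * iter T (Tb c) g s <= Hc c nu pi T g.
Proof.
move=> hnu [hpi0 hpi1] hp; elim: T g => [|T IH] g; first by rewrite Hc_0.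
rewrite Hc_rec iterSr; apply: le_trans (IH (Tb c g)) _.
apply: Exp_le => [x a|x a]; first exact: tp_ge0.
apply: ler_wpM2l; first exact: expR_ge0.
rewrite -[Tb c g _]mul1r -(hpi1 (fullh x a) (x ord_max)) mulr_suml.
apply: ler_sum => b _; apply: ler_wpM2l => //; exact: amin_le.
Qed.

Definition dopt c g T : nat -> st -> A := fun k s => amin c (iter (T - k.+1) (Tb c) g) s.

Lemma md_opt c nu g T :
  Hc c nu (md_policy R (dopt c g T)) T g = \sum_s nu s * iter T (Tb c) g s.
Proof.
elim: T g => [|T IH] g; first by rewrite Hc_0.
rewrite Hc_rec iterSr -IH /Hc.
transitivity (Exp p nu (md_policy R (dopt c g T.+1)) (T:=T)
   (fun x a => expR (- c * ret r x a) * Tb c g (x ord_max))).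
  by apply: Exp_eqf => x a; rewrite /md_policy size_fullh sum_sel /dopt subnn.
apply: Exp_ext => x a k; apply: funext => s; apply: funext => b.
rewrite /md_policy size_hist /dopt.
have -> : (T.+1 - k.+1 = (T - k.+1).+1)%N by rewrite subSn.
by rewrite iterSr.
Qed.

Lemma sd_eval c nu (d : {ffun st -> A}) g T :
  Hc c nu (sd_policy R d) T g = \sum_s nu s * iter T (Td c d) g s.
Proof.
elim: T g => [|T IH] g; first by rewrite Hc_0.
rewrite Hc_rec iterSr -IH /Hc.
by apply: Exp_eqf => x a; rewrite /sd_policy sum_sel.
Qed.
End MDP1.


Lemma cvg_fsum (R : realType) (I : finType) (f : I -> nat -> R) (l : I -> R) :
  (forall i, f i @ \oo --> l i) -> (fun n => \sum_i f i n) @ \oo --> \sum_i l i.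
Proof.
move=> h; rewrite -(fct_sumE _ _ (fun i n => f i n)).
elim/big_ind2: _ => //; first exact: cvg_cst.
by move=> x1 x2 y1 y2 h1 h2; apply: cvgD.
Qed.

Lemma liminf_le (R : realType) (u v : (\bar R)^nat) : (forall n, (u n <= v n)%E) -> (limn_einf u <= limn_einf v)%E.
Proof.
move=> huv; rewrite !limn_einf_lim; apply: lee_lim; [exact: is_cvg_einfs|exact: is_cvg_einfs|].
apply: nearW => n; apply: le_ereal_inf_tmp => _ [k hk <-]; apply: le_trans (huv k) .
by apply: ereal_inf_lbound; exists k.
Qed.

Lemma cvg_phi (R : realType) (b : R) (w : nat -> R) (l : R) : 0 < l -> w @ \oo --> l ->
  (fun n => (- b^-1 * ln (w n))%:E) @ \oo --> (- b^-1 * ln l)%:E.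
Proof.
move=> hl hw; apply: cvg_EFin; first exact: nearW.
apply: cvgMr. apply: continuous_cvg => //. exact: continuous_ln.
Qed.

Lemma comb_pos (R : realType) (I : finType) (w G : I -> R) : (forall i, 0 <= w i) ->
  \sum_i w i = 1 -> (forall i, 0 < G i) -> 0 < \sum_i w i * G i.
Proof.
move=> hw h1 hG; rewrite lt_neqAle sumr_ge0 ?andbT; last first.
  by move=> i _; rewrite mulr_ge0 // ltW.
apply/eqP => /esym h0.
have hz := psumr_eq0P (fun i _ => mulr_ge0 (hw i) (ltW (hG i))) h0.
move: h1; rewrite big1 => [/eqP|i _]; first by rewrite eq_sym oner_eq0.
by have /eqP := hz i isT; rewrite mulf_eq0 (gt_eqF (hG i)) orbF => /eqP.
Qed.

Lemma phi_le (R : realType) (beta u w : R) : 0 < beta -> 0 < u -> u <= w ->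
  - beta^-1 * ln w <= - beta^-1 * ln u.
Proof.
move=> hb hu huw; rewrite ler_nM2l ?oppr_lt0 ?invr_gt0 //.
by rewrite ler_ln ?posrE // (lt_le_trans hu).
Qed.

Section MDP2.
Variables (R : realType) (S : nat) (A : finType).
Variables (p r : state S -> A -> state S -> R) (a0 : A) (beta : R).
Hypothesis hb : 0 < beta.
Hypothesis hp0 : forall s a s', 0 <= p s a s'.
Hypothesis hp1 : forall s a, \sum_(s' : state S) p s a s' = 1.
Hypothesis hpe : forall a, p (sink S) a (sink S) = 1.
Hypothesis hre : forall a, r (sink S) a (sink S) = 0.
Local Notation st := (state S).
Local Notation e := (sink S).
Local Notation Tb := (Tb p r a0).
Local Notation Td := (Td p r).
Local Notation Qc := (Qc p r).
Local Notation Kc := (Kc p r).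

Definition one : st -> R := fun _ => 1.
Definition W t := iter t (Tb beta) one.
Definition V t s := - beta^-1 * ln (W t s).

Lemma Kc_ge0 c b s y : 0 <= Kc c b s y.
Proof. by rewrite /Kc mulr_ge0 ?expR_ge0. Qed.

Lemma Qc_mono c (g1 g2 : st -> R) s b : (forall y, g1 y <= g2 y) -> Qc c g1 s b <= Qc c g2 s b.
Proof. by move=> h; apply: ler_sum => y _; apply: ler_wpM2l; [exact: Kc_ge0|]. Qed.

Lemma Tb_mono c (g1 g2 : st -> R) : (forall y, g1 y <= g2 y) -> forall s, Tb c g1 s <= Tb c g2 s.
Proof. move=> h s; apply: le_trans (amin_le _ _ _ _ _ _ (amin p r a0 c g2 s)) _; exact: Qc_mono. Qed.

Lemma Td_mono c d (g1 g2 : st -> R) : (forall y, g1 y <= g2 y) -> forall s, Td c d g1 s <= Td c d g2 s.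
Proof. by move=> h s; apply: Qc_mono. Qed.

Lemma iter_mono (f : (st -> R) -> st -> R) : (forall g1 g2, (forall y, g1 y <= g2 y) -> forall s, f g1 s <= f g2 s) ->
  forall n g1 g2, (forall y, g1 y <= g2 y) -> forall s, iter n f g1 s <= iter n f g2 s.
Proof. by move=> hf; elim=> [|n IH] g1 g2 h s //=; apply: hf => y; apply: IH. Qed.

Lemma p_sink b y : p e b y = (y == e)%:R.
Proof.
have := hp1 e b; rewrite (bigD1 e) //= hpe => /(congr1 (fun x => x - 1)) /=.
rewrite addrAC subrr add0r => h.
case: eqP => [->|/eqP hy]; first by rewrite hpe.
exact: (psumr_eq0P (fun i _ => hp0 _ _ _) h).
Qed.

Lemma Qc_sink c g b : Qc c g e b = g e.
Proof.
rewrite /Qc /Kc; under eq_bigr => y _ do rewrite p_sink -!mulrA.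
by rewrite sum_sel hre mulr0 expR0 mul1r.
Qed.

Lemma Tb_sink c g : Tb c g e = g e. Proof. exact: Qc_sink. Qed.
Lemma Td_sink c d g : Td c d g e = g e. Proof. exact: Qc_sink. Qed.

Lemma Qc_pos c g s b : (forall y, 0 < g y) -> 0 < Qc c g s b.
Proof.
move=> hg; rewrite /Qc /Kc; under eq_bigr => y _ do rewrite -mulrA.
apply: comb_pos => // y; rewrite mulr_gt0 ?expR_gt0 //.
Qed.

Lemma W_pos t s : 0 < W t s.
Proof.
elim: t s => [|t IH] s; first by rewrite /W /= /one.
by rewrite /W iterS; apply: Qc_pos => y; apply: IH.
Qed.

Lemma md_HR (d : nat -> st -> A) : is_HR (md_policy R d).
Proof.
split=> [h s b|h s]; first by rewrite /md_policy ler0n.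
by rewrite /md_policy (bigD1 (d (size h) s)) //= eqxx big1 ?addr0 // => b /negbTE ->.
Qed.

Lemma v_t_eq t pi s : v_t p r beta t pi s = - beta^-1 * ln (Hc p r beta (Defs.dirac R s) pi t one).
Proof. by rewrite /v_t /ERM_ret /Hc; congr (_ * ln _); apply: Exp_eqf => x a; rewrite /one mulr1. Qed.

Lemma sum_dirac (s : st) (G : st -> R) : \sum_s' Defs.dirac R s s' * G s' = G s.
Proof. exact: sum_sel. Qed.

Lemma vstar_eq t s : v_t_star p r beta t s = (V t s)%:E.
Proof.
apply/eqP; rewrite eq_le; apply/andP; split.
- apply: ge_ereal_sup => _ [d _ <-]; rewrite lee_fin v_t_eq /V.
  apply: phi_le => //; first exact: W_pos.
  have := @HR_lower R S A p r a0 beta (Defs.dirac R s) (md_policy R d) t one (fun s' => ler0n _ _) (md_HR d) hp0.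
  by rewrite sum_dirac.
- apply: ereal_sup_ubound; exists (dopt p r a0 beta one t) => //.
  by rewrite v_t_eq md_opt sum_dirac.
Qed.

Variable mu : st -> R.
Hypothesis hmu0 : forall s, 0 <= mu s.
Hypothesis hmu1 : \sum_s mu s = 1.

Definition G t := - beta^-1 * ln (\sum_s mu s * W t.+1 s).

Lemma G_pos t : 0 < \sum_s mu s * W t s.
Proof. by apply: comb_pos => // s; exact: W_pos. Qed.

Lemma gstar_eq t : g_t_star p r mu beta t = (G t)%:E.
Proof.
have hg : forall pi, g_t p r mu beta t pi = - beta^-1 * ln (Hc p r beta mu pi t.+1 one).
  by move=> pi; rewrite /g_t /ERM_ret /Hc; congr (_ * ln _); apply: Exp_eqf => x a; rewrite /one mulr1.
apply/eqP; rewrite eq_le; apply/andP; split.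
- apply: ge_ereal_sup => _ [pi hpi <-]; rewrite lee_fin hg /G.
  apply: phi_le => //; first exact: G_pos.
  exact: (@HR_lower R S A p r a0 beta mu pi t.+1 one hmu0 hpi hp0).
- apply: ereal_sup_ubound; exists (md_policy R (dopt p r a0 beta one t.+1)); first exact: md_HR.
  by rewrite hg md_opt.
Qed.

Definition z : st -> R := fun s => (s == e)%:R.
Definition u t := iter t (Tb beta) z.

Lemma Qc_ge0 c g s b : (forall y, 0 <= g y) -> 0 <= Qc c g s b.
Proof. by move=> h; apply: sumr_ge0 => y _; apply: mulr_ge0 => //; exact: Kc_ge0. Qed.

Lemma iter_ge0 (f : (st -> R) -> st -> R) g : (forall g, (forall y, 0 <= g y) -> forall s, 0 <= f g s) ->
  (forall y, 0 <= g y) -> forall t s, 0 <= iter t f g s.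
Proof. by move=> hf hg; elim=> [|t IH] s //=; apply: hf. Qed.

Lemma iter_sink (f : (st -> R) -> st -> R) g : (forall g, f g e = g e) -> forall t, iter t f g e = g e.
Proof. by move=> hf; elim=> [|t IH] //=; rewrite hf. Qed.

Lemma z_le (f : (st -> R) -> st -> R) : (forall g, f g e = g e) ->
  (forall g, (forall y, 0 <= g y) -> forall s, 0 <= f g s) -> forall s, z s <= f z s.
Proof.
move=> he h0 s; rewrite /z; case: eqP => [->|_]; first by rewrite he /z eqxx.
by apply: h0 => y; rewrite ler0n.
Qed.

Lemma iter_incr (f : (st -> R) -> st -> R) g :
  (forall g1 g2, (forall y, g1 y <= g2 y) -> forall s, f g1 s <= f g2 s) ->
  (forall s, g s <= f g s) -> forall t s, iter t f g s <= iter t.+1 f g s.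
Proof. by move=> hf hg t s; rewrite iterSr; apply: iter_mono. Qed.

Lemma incr_mono (f : nat -> R) : (forall n, f n <= f n.+1) -> forall m n, (m <= n)%N -> f m <= f n.
Proof.
move=> h m n /subnK <-; elim: (n - m)%N => [|k IH] //; rewrite addSn; exact: le_trans IH (h _).
Qed.

Lemma Tb_ge0 c g : (forall y, 0 <= g y) -> forall s, 0 <= Tb c g s.
Proof. by move=> h s; apply: Qc_ge0. Qed.
Lemma Td_ge0 c d g : (forall y, 0 <= g y) -> forall s, 0 <= Td c d g s.
Proof. by move=> h s; apply: Qc_ge0. Qed.

Lemma z_ge0 y : 0 <= z y. Proof. by rewrite /z ler0n. Qed.

Lemma u_ge0 t s : 0 <= u t s.
Proof. apply: iter_ge0 => [g hg s'|y]; [exact: Tb_ge0|exact: z_ge0]. Qed.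

Lemma u_incr t s : u t s <= u t.+1 s.
Proof.
apply: iter_incr; first exact: Tb_mono.
apply: z_le; [exact: Tb_sink|exact: Tb_ge0].
Qed.

Lemma u_mono s m n : (m <= n)%N -> u m s <= u n s.
Proof. by apply: (incr_mono (f := fun t => u t s)) => t; apply: u_incr. Qed.

Lemma u_sink t : u t e = 1.
Proof. by rewrite /u iter_sink ?/z ?eqxx //; exact: Tb_sink. Qed.

Lemma u_le_W t s : u t s <= W t s.
Proof. apply: iter_mono; first exact: Tb_mono. by move=> y; rewrite /z /one lern1 leq_b1. Qed.

Lemma iter_le (f1 f2 : (st -> R) -> st -> R) :
  (forall g1 g2, (forall y, g1 y <= g2 y) -> forall s, f2 g1 s <= f2 g2 s) ->
  (forall g s, f1 g s <= f2 g s) -> forall t g s, iter t f1 g s <= iter t f2 g s.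
Proof.
move=> h2 h12; elim=> [|t IH] g s //=; apply: le_trans (h12 _ _) _; exact: h2.
Qed.

Definition Wd (d : st -> A) t := iter t (Td beta d) one.

Lemma W_le_Wd d t s : W t s <= Wd d t s.
Proof.
apply: iter_le => [|g s']; first exact: Td_mono.
exact: amin_le.
Qed.

Lemma Qc_add c (g1 g2 : st -> R) s b : Qc c (fun y => g1 y + g2 y) s b = Qc c g1 s b + Qc c g2 s b.
Proof. by rewrite /Qc -big_split; apply: eq_bigr => y _; rewrite mulrDr. Qed.
Lemma Qc_scale c (k : R) (g : st -> R) s b : Qc c (fun y => k * g y) s b = k * Qc c g s b.
Proof. by rewrite /Qc mulr_sumr; apply: eq_bigr => y _; rewrite mulrCA. Qed.

Lemma iterTd_add c d (g1 g2 : st -> R) t s :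
  iter t (Td c d) (fun y => g1 y + g2 y) s = iter t (Td c d) g1 s + iter t (Td c d) g2 s.
Proof.
elim: t s => [|t IH] s //=; rewrite /Td -Qc_add; congr Qc; apply: funext => y; exact: IH.
Qed.
Lemma iterTd_scale c d (k : R) (g : st -> R) t s :
  iter t (Td c d) (fun y => k * g y) s = k * iter t (Td c d) g s.
Proof.
elim: t s => [|t IH] s //=; rewrite /Td -Qc_scale; congr Qc; apply: funext => y; exact: IH.
Qed.

Lemma Qc_le_on c (d : st -> A) (F : st -> Prop) (g1 g2 : st -> R) s :
  (forall y, p s (d s) y != 0 -> F y) -> (forall y, F y -> g1 y <= g2 y) ->
  Qc c g1 s (d s) <= Qc c g2 s (d s).
Proof.
move=> hc h; apply: ler_sum => y _; have [/eqP p0|/hc Fy] := boolP (p s (d s) y == 0).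
  by rewrite /Kc p0 !mul0r.
by apply: ler_wpM2l; [exact: Kc_ge0|exact: h].
Qed.

Lemma iter_le_on c (d : st -> A) (F : st -> Prop) (g1 g2 : st -> R) :
  (forall s y, F s -> p s (d s) y != 0 -> F y) -> (forall y, F y -> g1 y <= g2 y) ->
  forall t s, F s -> iter t (Td c d) g1 s <= iter t (Td c d) g2 s.
Proof.
move=> hc h; elim=> [|t IH] s Fs /=; first exact: h.
apply: Qc_le_on => [y|y Fy]; [exact: hc|exact: IH].
Qed.

Lemma Exp_lin (I : finType) nu pi T (k : I -> R) (f : I -> {ffun 'I_T.+1 -> st} -> {ffun 'I_T -> A} -> R) :
  Exp p nu pi (T:=T) (fun x a => \sum_i k i * f i x a) =
  \sum_i k i * Exp p nu pi (T:=T) (f i).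
Proof.
rewrite /Exp; under [RHS]eq_bigr => i _ do rewrite mulr_sumr.
rewrite [RHS]exchange_big; apply: eq_bigr => x _.
under [RHS]eq_bigr => i _ do rewrite mulr_sumr.
rewrite [RHS]exchange_big; apply: eq_bigr => a _.
by rewrite mulr_sumr; apply: eq_bigr => i _; rewrite mulrCA.
Qed.

Lemma Qc_term c g s b y : (forall y, 0 <= g y) -> Kc c b s y * g y <= Qc c g s b.
Proof.
move=> h; rewrite /Qc (bigD1 y) //= lerDl; apply: sumr_ge0 => y' _.
by apply: mulr_ge0 => //; exact: Kc_ge0.
Qed.

Lemma Kc_gt0 c b s y : p s b y != 0 -> 0 < Kc c b s y.
Proof. by move=> h; rewrite /Kc mulr_gt0 ?expR_gt0 // lt_neqAle eq_sym h hp0. Qed.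

Lemma reach (d : {ffun st -> A}) : transient p -> forall s, s != e ->
  exists m, 0 < iter m (Td beta d) z s.
Proof.
move=> htr s0 hs0; apply: contrapT => hnr.
have hz0 : forall m, iter m (Td beta d) z s0 = 0.
  move=> m; apply/eqP; rewrite eq_le iter_ge0 ?andbT; last 2 first.
  - by move=> g hg s'; apply: Td_ge0.
  - exact: z_ge0.
  by rewrite leNgt; apply/negP => h; apply: hnr; exists m.
pose C y := y != e /\ forall m, iter m (Td beta d) z y = 0.
have hit0 : forall m y, 0 <= iter m (Td beta d) z y.
  by move=> m y; apply: iter_ge0 => [g hg s'|y']; [exact: Td_ge0|exact: z_ge0].
have hC : forall y y', C y -> p y (d y) y' != 0 -> C y'.
  move=> y y' [hy hm] hp; have hK : 0 < Kc beta (d y) y y' by exact: Kc_gt0.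
  have step : forall m, Kc beta (d y) y y' * iter m (Td beta d) z y' <= 0.
    move=> m; rewrite -(hm m.+1) iterS; exact: (Qc_term _ _ _ _ (hit0 m)).
  split.
  - apply/eqP => ey'; have := step 0%N; rewrite /= {2}ey' /z eqxx mulr1 => h.
    by move: (lt_le_trans hK h); rewrite ltxx.
  - move=> m; apply/eqP; rewrite eq_le hit0 andbT.
    by have := step m; rewrite pmulr_rle0.
pose chi y : R := (`[< C y >])%:R.
have chi_le1 : forall y, chi y <= 1 by move=> y; rewrite /chi lern1 leq_b1.
have hchi : forall y, chi y <= Td 0 d chi y.
  move=> y; rewrite /chi; case: asboolP => Cy; last first.
    by apply: Td_ge0 => y'; rewrite ler0n.
  rewrite (_ : (true%:R : R) = 1) // /Td /Qc.
  rewrite (eq_bigr (fun y' => p y (d y) y')) ?hp1 // => y' _.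
  have [/eqP p0|hp] := boolP (p y (d y) y' == 0); first by rewrite /Kc p0 !mul0r.
  rewrite /Kc oppr0 mul0r expR0 mulr1 asboolT; [exact: mulr1 | exact: hC hp].
have Cs0 : C s0 by split.
have hP : forall t, 1 <= \sum_(s' | s' != e)
    Exp p (Defs.dirac R s0) (sd_policy R d) (T:=t) (fun x _ => (x ord_max == s')%:R).
  move=> t.
  have h1 : 1 <= iter t (Td 0 d) chi s0.
    have -> : 1 = chi s0 by rewrite /chi asboolT.
    have hinc : forall n, iter n (Td 0 d) chi s0 <= iter n.+1 (Td 0 d) chi s0.
      by move=> n; apply: iter_incr => //; exact: Td_mono.
    exact: (incr_mono hinc (leq0n t)).
  apply: le_trans h1 _.
  rewrite -[X in X <= _](sum_dirac s0 (iter t (Td 0 d) chi)) -sd_eval /Hc.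
  have -> : (fun x (a : {ffun 'I_t -> A}) => expR (- 0 * ret r x a) * chi (x ord_max)) =
      (fun x a => \sum_s' chi s' * (x ord_max == s')%:R).
    apply: funext => x; apply: funext => a; rewrite oppr0 mul0r expR0 mul1r.
    by under eq_bigr => s' _ do rewrite mulrC eq_sym; rewrite sum_sel.
  rewrite Exp_lin (bigD1 e) //=.
  have -> : chi e = 0 by rewrite /chi asboolF // => -[] /eqP.
  rewrite mul0r add0r; apply: ler_sum => s' _; rewrite ler_piMl //.
  apply: sumr_ge0 => x _; apply: sumr_ge0 => a _; apply: mulr_ge0; last by rewrite ler0n.
  by apply: tp_ge0 => // [s'' | h s'' b]; rewrite ler0n.
pose P t s' := Exp p (Defs.dirac R s0) (sd_policy R d) (T:=t) (fun x _ => (x ord_max == s')%:R).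
have P0 : forall t s', 0 <= P t s'.
  move=> t s'; apply: sumr_ge0 => x _; apply: sumr_ge0 => a _; apply: mulr_ge0; last by rewrite ler0n.
  by apply: tp_ge0 => // [s'' | h s'' b]; rewrite ler0n.
pose L s' := fine (\sum_(0 <= t <oo) (P t s')%:E).
have hL : forall s', s' != e -> forall N, \sum_(0 <= t < N) P t s' <= L s'.
  move=> s' hs' N; have h := htr d s0 s' hs0 hs'.
  rewrite -lee_fin /L fineK; last first.
    by rewrite ge0_fin_numE // nneseries_ge0 // => n _ _; rewrite lee_fin.
  by rewrite -sumEFin; apply: nneseries_lim_ge => n _ _; rewrite lee_fin.
pose N := (Num.truncn (\sum_(s' | s' != e) L s')).+1.
have h1 : N%:R <= \sum_(0 <= t < N) \sum_(s' | s' != e) P t s'.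
  apply: le_trans (_ : \sum_(0 <= t < N) (1:R) <= _).
    by rewrite sumr_const_nat subn0.
  by apply: ler_sum => t _; exact: hP.
have h2 : \sum_(0 <= t < N) \sum_(s' | s' != e) P t s' <= \sum_(s' | s' != e) L s'.
  rewrite exchange_big; apply: ler_sum => s' hs'; exact: hL.
have := lt_le_trans (truncnS_gt _) (le_trans h1 h2).
by rewrite ltxx.
Qed.

Definition Fb s := exists M, forall t, u t s <= M.
Definition U s := limn (fun t => u t s).

Lemma u_cvg s : Fb s -> (fun t => u t s) @ \oo --> U s.
Proof.
move=> [M hM].
have h : (fun t => u t s) @ \oo --> sup (range (fun t => u t s)).
  apply: nondecreasing_cvgn; first by move=> m n; exact: u_mono.
  by exists M => _ [t _ <-].
by rewrite /U (cvg_lim _ h).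
Qed.

Lemma u_le_U s : Fb s -> forall t, u t s <= U s.
Proof.
move=> Fs t; apply: nondecreasing_cvgn_le; first by move=> m n; exact: u_mono.
exact: cvgP (u_cvg Fs).
Qed.

Lemma Fb_sink : Fb e. Proof. by exists 1 => t; rewrite u_sink. Qed.

Lemma U_sink : U e = 1.
Proof.
rewrite /U (_ : (fun t => u t e) = fun _ => 1); first exact: lim_cst.
by apply: funext => t; exact: u_sink.
Qed.

Lemma U_ge0 s : Fb s -> 0 <= U s.
Proof. by move=> Fs; exact: le_trans (u_ge0 0 s) (u_le_U Fs 0). Qed.

Lemma ex_act s : Fb s -> exists b, forall t, Qc beta (u t) s b <= U s.
Proof.
move=> Fs; apply: contrapT => hn.
have hb1 : forall b, exists t, U s < Qc beta (u t) s b.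
  move=> b; apply: contrapT => h; apply: hn; exists b => t.
  by rewrite leNgt; apply/negP => h'; apply: h; exists t.
case: (choice hb1) => tb htb.
pose N := (\max_b tb b)%N.
pose b := amin p r a0 beta (u N) s.
have h1 : u N.+1 s = Qc beta (u N) s b by [].
have h2 : Qc beta (u (tb b)) s b <= Qc beta (u N) s b.
  by apply: Qc_mono => y; apply: u_mono; exact: leq_bigmax.
have := lt_le_trans (htb b) h2; rewrite -h1 => h3.
by have := lt_le_trans h3 (u_le_U Fs N.+1); rewrite ltxx.
Qed.

Lemma ex_d : exists d : {ffun st -> A}, forall s, Fb s -> forall t, Qc beta (u t) s (d s) <= U s.
Proof.
have h : forall s, exists b, Fb s -> forall t, Qc beta (u t) s b <= U s.
  move=> s; case: (pselect (Fb s)) => [Fs|nFs]; last by exists a0.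
  by have [b hb2] := ex_act Fs; exists b.
case: (choice h) => f hf; exists [ffun s => f s] => s Fs t; rewrite ffunE; exact: hf.
Qed.

Lemma iter_zero c d t s : iter t (Td c d) (fun _ => 0) s = 0.
Proof.
elim: t s => [|t IH] s //=; rewrite /Td /Qc big1 // => y _; by rewrite IH mulr0.
Qed.

Lemma decr_mono (f : nat -> R) : (forall n, f n.+1 <= f n) -> forall m n, (m <= n)%N -> f n <= f m.
Proof.
move=> h m n /subnK <-; elim: (n - m)%N => [|k IH] //; rewrite addSn; exact: le_trans (h _) IH.
Qed.

Section Opt.
Variable d : {ffun st -> A}.
Hypothesis hd : forall s, Fb s -> forall t, Qc beta (u t) s (d s) <= U s.
Hypothesis htr : transient p.

Lemma closedF s y : Fb s -> p s (d s) y != 0 -> Fb y.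
Proof.
move=> Fs hp; have hK : 0 < Kc beta (d s) s y by exact: Kc_gt0.
exists (U s / Kc beta (d s) s y) => t.
rewrite ler_pdivlMr // mulrC; apply: le_trans (hd Fs t).
by apply: Qc_term => y'; exact: u_ge0.
Qed.

Lemma closedF' : forall s y, Fb s -> p s (d s) y != 0 -> Fb y.
Proof. exact: closedF. Qed.

Lemma superF s : Fb s -> Td beta d U s <= U s.
Proof.
move=> Fs.
have hc : (fun t => Qc beta (u t) s (d s)) @ \oo --> Td beta d U s.
  apply: cvg_fsum => y; have [/eqP p0|hp] := boolP (p s (d s) y == 0).
    have -> : Kc beta (d s) s y = 0 by rewrite /Kc p0 !mul0r.
    rewrite mul0r (_ : (fun t => 0 * u t y) = fun _ => 0); first exact: cvg_cst.
    by apply: funext => t; rewrite mul0r.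
  by apply: cvgMr; apply: u_cvg; exact: closedF hp.
rewrite -(cvg_lim _ hc) //; apply: limr_le; first exact: cvgP hc.
by apply: nearW => t; exact: hd.
Qed.

Lemma U_super_iter t s : Fb s -> iter t (Td beta d) U s <= U s.
Proof.
elim: t s => [|t IH] s Fs //=.
apply: le_trans (superF Fs); apply: Qc_le_on => [y hy|y Fy]; first exact: closedF hy.
exact: IH.
Qed.

Lemma z_le_U y : Fb y -> z y <= U y.
Proof.
move=> Fy; rewrite /z; case: eqP => [->|_]; first by rewrite U_sink.
exact: U_ge0.
Qed.

Definition U' y := U y - z y.
Definition y1 : st -> R := fun y => 1 - z y.

Lemma U_split t s : iter t (Td beta d) U s = iter t (Td beta d) z s + iter t (Td beta d) U' s.
Proof.
rewrite -iterTd_add; congr (iter _ _ _ _); apply: funext => y; by rewrite /U' addrC subrK.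
Qed.

Lemma one_split t s : Wd d t s = iter t (Td beta d) z s + iter t (Td beta d) y1 s.
Proof.
rewrite -iterTd_add; congr (iter _ _ _ _); apply: funext => y; by rewrite /y1 /one addrC subrK.
Qed.

Lemma Tdz_incr t s : iter t (Td beta d) z s <= iter t.+1 (Td beta d) z s.
Proof.
apply: iter_incr; first exact: Td_mono.
apply: z_le; [exact: Td_sink|exact: Td_ge0].
Qed.

Lemma ex_m0 : exists m0, forall s, s != e -> 0 < iter m0 (Td beta d) z s.
Proof.
have h : forall s, exists m, s != e -> 0 < iter m (Td beta d) z s.
  move=> s; case: (eqVneq s e) => [->|hs]; first by exists 0%N.
  by have [m hm] := reach d htr hs; exists m.
case: (choice h) => ms hms; exists (\max_s ms s)%N => s hs.
apply: lt_le_trans (hms s hs) _.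
apply: (incr_mono (f := fun m => iter m (Td beta d) z s)) => [n|]; [exact: Tdz_incr | exact: leq_bigmax].
Qed.

Lemma U_pos s : Fb s -> 0 < U s.
Proof.
move=> Fs; case: (eqVneq s e) => [->|hs]; first by rewrite U_sink.
have [m hm] := reach d htr hs; apply: lt_le_trans hm _.
apply: le_trans (U_super_iter m Fs).
apply: (@iter_le_on beta d Fb _ _ closedF') => //; [exact: z_le_U].
Qed.

Lemma Wd_cvg s : Fb s ->
  (fun t => Wd d t s) @ \oo --> U s /\ (fun t => W t s) @ \oo --> U s.
Proof.
move=> Fs.
have [m0 hm0] := ex_m0.
pose c0 := \big[Order.min/1]_(y | y != e) iter m0 (Td beta d) z y.
have c0_gt0 : 0 < c0.
  rewrite /c0; apply: (big_ind (fun x : R => 0 < x)) => //. all: try (move=> y hy; exact: hm0). move=> x y hx hy; by rewrite lt_min hx hy.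
have c0_le : forall y, y != e -> c0 <= iter m0 (Td beta d) z y.
  by move=> y hy; exact: bigmin_le_cond.
have hUc : forall y, Fb y -> y != e -> c0 <= U y.
  move=> y Fy hy; apply: le_trans (c0_le y hy) _; apply: le_trans (U_super_iter m0 Fy).
  apply: (@iter_le_on beta d Fb _ _ closedF') => //; [exact: z_le_U].
pose Umax := c0 + \sum_y `|U y|.
have hS0 : 0 <= \sum_y `|U y| by apply: sumr_ge0 => y _; exact: normr_ge0.
have hUmax : forall y, U y <= Umax.
  move=> y; apply: le_trans (ler_norm (U y)) _; rewrite /Umax (bigD1 y) //= addrCA lerDl.
  by apply: addr_ge0; [exact: ltW|apply: sumr_ge0 => y' _; exact: normr_ge0].
have Umax_gt0 : 0 < Umax by rewrite /Umax ltr_pwDl.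
pose th := 1 - c0 / Umax.
have hq : 0 < c0 / Umax by exact: divr_gt0.
have hq1 : c0 / Umax <= 1 by rewrite ler_pdivrMr // mul1r /Umax lerDl.
have th0 : 0 <= th by rewrite /th subr_ge0.
have th1 : th < 1 by rewrite /th ltrBlDl ltrDr.
have hU'0 : forall y, Fb y -> 0 <= U' y by move=> y Fy; rewrite /U' subr_ge0; exact: z_le_U.
have hzy : forall y, 0 <= z y by move=> y; exact: z_ge0.
have hcontr : forall y, Fb y -> iter m0 (Td beta d) U' y <= th * U' y.
  move=> y Fy; case: (eqVneq y e) => [->|hy].
    have -> : iter m0 (Td beta d) U' e = U' e by apply: iter_sink; exact: Td_sink.
    by rewrite /U' U_sink /z eqxx subrr mulr0.
  have h1 := U_split m0 y; have h2 := U_super_iter m0 Fy; have h3 := c0_le y hy.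
  have zy : z y = 0 by rewrite /z (negbTE hy).
  have hk : c0 / Umax * U y <= c0.
    by rewrite mulrAC ler_pdivrMr // ler_wpM2l ?hUmax // ltW.
  have hU'y : U' y = U y by rewrite /U' zy subr0.
  rewrite hU'y /th mulrBl mul1r.
  lra.
have hgeo : forall k y, Fb y -> iter (k * m0) (Td beta d) U' y <= th ^+ k * U' y.
  elim=> [|k IH] y Fy; first by rewrite mul0n expr0 mul1r.
  rewrite mulSn iterD.
  apply: le_trans (_ : iter m0 (Td beta d) (fun y' => th ^+ k * U' y') y <= _).
    apply: (@iter_le_on beta d Fb _ _ closedF') => //.
  rewrite iterTd_scale exprS (mulrC th) -mulrA; apply: ler_wpM2l; [exact: exprn_ge0 | exact: hcontr].
have hdec : forall t y, Fb y -> iter t.+1 (Td beta d) U' y <= iter t (Td beta d) U' y.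
  move=> t y Fy; rewrite iterSr; apply: (@iter_le_on beta d Fb _ _ closedF') => //.
  move=> y' Fy'; have := U_split 1 y'; rewrite /= => h1.
  have h2 := superF Fy'; have h3 : z y' <= Td beta d z y'.
    by apply: z_le; [exact: Td_sink|exact: Td_ge0].
  have hU'y : U' y' = U y' - z y' by [].
  rewrite hU'y; lra.
have hy1 : forall t, iter t (Td beta d) y1 s <= c0^-1 * iter t (Td beta d) U' s.
  move=> t; rewrite -iterTd_scale; apply: (@iter_le_on beta d Fb _ _ closedF') => //.
  move=> y Fy; rewrite /y1 /U' /z; case: eqP => [->|/eqP hy].
    by rewrite U_sink subrr mulr0.
  by rewrite !subr0 ler_pdivlMl // mulr1; exact: hUc.
have hzU : forall t, iter t (Td beta d) z s <= U s.
  move=> t; apply: le_trans (U_super_iter t Fs).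
  apply: (@iter_le_on beta d Fb _ _ closedF') => //; [exact: z_le_U].
have hupper : forall eps, 0 < eps -> \forall t \near \oo, Wd d t s <= U s + eps.
  move=> eps he.
  have : (fun k => th ^+ k) @ \oo --> (0:R) by apply: cvg_expr; rewrite ger0_norm.
  move=> /cvgrPdist_le /(_ (eps * c0 / Umax)) [|N _ hN].
    by apply: divr_gt0 => //; exact: mulr_gt0.
  have hthN : th ^+ N <= eps * c0 / Umax.
    by have := hN N (leqnn N); rewrite sub0r normrN ger0_norm // exprn_ge0.
  exists (N * m0)%N => // t ht.
  rewrite one_split.
  have a1 := hzU t; have a2 := hy1 t.
  have a3 : iter t (Td beta d) U' s <= iter (N * m0) (Td beta d) U' s.
    exact: (decr_mono (f := fun t => iter t (Td beta d) U' s) (fun n => hdec n s Fs) ht).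
  have a4 := hgeo N s Fs.
  have hU's : U' s <= Umax by apply: le_trans (hUmax s); rewrite /U' lerBlDr lerDl.
  have a5 : th ^+ N * U' s <= eps * c0 / Umax * Umax.
    by apply: ler_pM => //; [exact: exprn_ge0|exact: hU'0].
  rewrite divfK ?gt_eqF // in a5.
  have a7 : c0^-1 * iter t (Td beta d) U' s <= eps.
    rewrite ler_pdivrMl // mulrC; apply: le_trans a3 _; apply: le_trans a4 _; exact: a5.
  lra.
have hlower : forall eps, 0 < eps -> \forall t \near \oo, U s - eps <= W t s.
  move=> eps he; have h := (cvgrPdist_le _ _).1 (u_cvg Fs) eps he.
  near=> t; apply: le_trans (u_le_W t s).
  have : `|U s - u t s| <= eps by near: t; exact: h.
  by rewrite ler_distlC => /andP[].
split; apply/cvgrPdist_le => eps he; have hl := hlower eps he; have hu := hupper eps he;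
  near=> t; rewrite ler_distlC; apply/andP; split.
- apply: le_trans (W_le_Wd d t s); near: t; exact: hl.
- near: t; exact: hu.
- near: t; exact: hl.
- apply: le_trans (W_le_Wd d t s) _; near: t; exact: hu.
Unshelve. all: by end_near.
Qed.
End Opt.

Hypothesis hmue : mu e = 0.
Hypothesis hmupos : forall s, s != e -> 0 < mu s.

Lemma unb s : ~ Fb s -> forall M, exists N, forall t, (N <= t)%N -> M <= W t s.
Proof.
move=> nF M; have [t0 ht0] : exists t0, M < u t0 s.
  apply: contrapT => h; apply: nF; exists M => t; rewrite leNgt; apply/negP => h'; apply: h; by exists t.
exists t0 => t ht; apply: le_trans (ltW ht0) _; apply: le_trans (u_mono s ht) _; exact: u_le_W.
Qed.

Lemma vinf_star_eq s : v_inf_star p r beta s = limn_einf (fun t => (V t s)%:E).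
Proof. by rewrite /v_inf_star; congr limn_einf; apply: funext => t; rewrite vstar_eq. Qed.

Lemma vinf_sd_eq d' s : v_inf p r beta (sd_policy R d') s =
  limn_einf (fun t => (- beta^-1 * ln (Wd d' t s))%:E).
Proof.
rewrite /v_inf; congr limn_einf; apply: funext => t.
by rewrite v_t_eq sd_eval sum_dirac.
Qed.

Lemma phi_Ny (w : nat -> R) : (forall M, exists N, forall t, (N <= t)%N -> M <= w t) ->
  limn_einf (fun t => (- beta^-1 * ln (w t))%:E) = -oo%E.
Proof.
move=> hw; apply: (cvg_limn_einf_sup _).1; apply/cvgeNyPle => M.
have [N hN] := hw (expR (- beta * M)); exists N => // t ht.
rewrite lee_fin; apply: le_trans (phi_le hb (expR_gt0 _) (hN t ht)) _.
by rewrite expRK mulrA mulrNN mulVf ?gt_eqF // mul1r.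
Qed.

Lemma lee_nmul (k : R) (x y : \bar R) : k < 0 -> (x <= y)%E -> (k%:E * y <= k%:E * x)%E.
Proof. by move=> hk hxy; rewrite leNgt lte_nmul2l ?lte_fin // -leNgt. Qed.

Lemma ERM_ext v v' : (forall s, s != e -> v s = v' s) -> ERM_mu mu beta v = ERM_mu mu beta v'.
Proof. by move=> h; rewrite /ERM_mu; congr (_ * lne _)%E; apply: eq_bigr => s hs; rewrite h. Qed.

Lemma ERM_mono v v' : (forall s, s != e -> (v s <= v' s)%E) -> (ERM_mu mu beta v <= ERM_mu mu beta v')%E.
Proof.
move=> h; rewrite /ERM_mu; apply: lee_nmul; first by rewrite oppr_lt0 invr_gt0.
have hge : forall w : st -> \bar R, (0 <= \sum_(s | s != e) (mu s)%:E * expeR ((- beta)%:E * w s))%E.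
  by move=> w; apply: sume_ge0 => s _; apply: mule_ge0; [rewrite lee_fin|exact: expeR_ge0].
rewrite lee_lne ?in_itv /= ?hge ?leey //.
apply: lee_sum => s hs; apply: lee_wpmul2l; first by rewrite lee_fin.
rewrite lee_expeR; apply: lee_nmul; [by rewrite oppr_lt0|exact: h].
Qed.

Lemma ERM_fin (w : st -> R) : (forall s, 0 < w s) ->
  ERM_mu mu beta (fun s => (- beta^-1 * ln (w s))%:E) = (- beta^-1 * ln (\sum_s mu s * w s))%:E.
Proof.
move=> hw; rewrite /ERM_mu.
rewrite (eq_bigr (fun s => (mu s * w s)%:E)) => [|s _]; last first.
  rewrite (_ : ((mu s)%:E * expeR ((- beta)%:E * (- beta^-1 * ln (w s))%:E))%E =
     (mu s * expR (- beta * (- beta^-1 * ln (w s))))%:E) //.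
  by rewrite mulrA mulrNN mulfV ?gt_eqF // mul1r lnK // posrE.
rewrite sumEFin (_ : \sum_(s | s != e) mu s * w s = \sum_s mu s * w s); last first.
  by rewrite [RHS](bigD1 e) //= hmue mul0r add0r.
by rewrite lne_EFin ?comb_pos // -EFinM.
Qed.

Lemma ERM_Ny v s0 : s0 != e -> v s0 = -oo%E -> ERM_mu mu beta v = -oo%E.
Proof.
move=> hs0 hv; rewrite /ERM_mu (bigD1 s0) //= hv lt0_muleNy ?lte_fin ?oppr_lt0 //=.
rewrite gt0_muley ?lte_fin ?hmupos //.
set rest := (\sum_(i | _) _)%E.
have hr : (0 <= rest)%E.
  by apply: sume_ge0 => s _; apply: mule_ge0; [rewrite lee_fin|exact: expeR_ge0].
rewrite addye /=; last by apply/negP => /eqP hh; rewrite hh in hr.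
by rewrite lt0_muley // lte_fin oppr_lt0 invr_gt0.
Qed.

Lemma main_thm (htr : transient p) :
  exists pistar : {ffun st -> A},
    (forall s, s != e ->
       v_inf_star p r beta s = v_inf p r beta (sd_policy R pistar) s) /\
    g_inf_star p r mu beta = ERM_mu mu beta (v_inf_star p r beta) /\
    ERM_mu mu beta (v_inf_star p r beta) =
      \big[maxe/-oo%E]_(d : {ffun st -> A})
         ERM_mu mu beta (v_inf p r beta (sd_policy R d)).
Proof.
have [d hd] := ex_d.
have hF : forall s, Fb s -> v_inf_star p r beta s = (- beta^-1 * ln (U s))%:E /\
    v_inf p r beta (sd_policy R d) s = (- beta^-1 * ln (U s))%:E.
  move=> s Fs; have [h1 h2] := Wd_cvg hd htr Fs; have hU := U_pos hd htr Fs.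
  by rewrite vinf_star_eq vinf_sd_eq; split; apply: (cvg_limn_einf_sup _).1; apply: cvg_phi.
have hnF : forall s, ~ Fb s -> v_inf_star p r beta s = -oo%E /\
    v_inf p r beta (sd_policy R d) s = -oo%E.
  move=> s nF; rewrite vinf_star_eq vinf_sd_eq; split; apply: phi_Ny => M.
    exact: unb.
  have [N hN] := unb nF M; exists N => t ht; apply: le_trans (hN t ht) _; exact: W_le_Wd.
have h1 : forall s, s != e -> v_inf_star p r beta s = v_inf p r beta (sd_policy R d) s.
  move=> s hs; case: (pselect (Fb s)) => [Fs|nF].
    by have [-> ->] := hF s Fs.
  by have [-> ->] := hnF s nF.
exists d; split => //; split.
- have -> : g_inf_star p r mu beta = limn_einf (fun t => (- beta^-1 * ln (\sum_s mu s * W t.+1 s))%:E).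
    by rewrite /g_inf_star; congr limn_einf; apply: funext => t; rewrite gstar_eq.
  case: (pselect (forall s, s != e -> Fb s)) => [hall|hnot].
  + have hFall : forall s, Fb s.
      by move=> s; case: (eqVneq s e) => [->|hs]; [exact: Fb_sink|exact: hall].
    have hcv : (fun t => \sum_s mu s * W t.+1 s) @ \oo --> \sum_s mu s * U s.
      have : (fun t => \sum_s mu s * W t s) @ \oo --> \sum_s mu s * U s.
        apply: cvg_fsum => s; apply: cvgMr; exact: (Wd_cvg hd htr (hFall s)).2.
      by rewrite -cvg_shiftS.
    have hU : forall s, 0 < U s by move=> s; exact: (U_pos hd htr (hFall s)).
    rewrite (ERM_ext (v' := fun s => (- beta^-1 * ln (U s))%:E)); last first.
      by move=> s hs; exact: (hF s (hFall s)).1.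
    rewrite ERM_fin //; apply: (cvg_limn_einf_sup _).1; apply: cvg_phi => //.
    exact: comb_pos.
  + have [s0 [hs0 nF]] : exists s0, s0 != e /\ ~ Fb s0.
      apply: contrapT => h; apply: hnot => s hs; apply: contrapT => nF; apply: h; by exists s.
    rewrite (ERM_Ny hs0 (hnF s0 nF).1); apply: phi_Ny => M.
    have [N hN] := unb nF (M / mu s0); exists N => t ht.
    have hmus0 := hmupos hs0.
    apply: le_trans (_ : mu s0 * W t.+1 s0 <= _).
      by rewrite -ler_pdivrMl // mulrC; exact: hN (leqW ht).
    rewrite (bigD1 s0) //= lerDl; apply: sumr_ge0 => s' _; apply: mulr_ge0; [exact: hmu0 | exact: (ltW (W_pos t.+1 s'))].
- apply/eqP; rewrite eq_le; apply/andP; split.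
  + rewrite (ERM_ext h1); exact: (le_bigmax _ _ d).
  + apply: bigmax_le => [|d' _]; first exact: leNye.
    apply: ERM_mono => s hs; rewrite /v_inf /v_inf_star; apply: liminf_le => t.
    rewrite /v_t_star; apply: ereal_sup_ubound; by exists (fun _ s => d' s).
Qed.
End MDP2.

End AllHelpers.

Theorem corollary2 (R : realType) (S : nat) (A : finType)
  (p r : state S -> A -> state S -> R) (mu : state S -> R) (beta : R) :
  0 < beta ->
  (0 < #|A|)%N ->
  (forall s a s', 0 <= p s a s') ->
  (forall s a, \sum_(s' : state S) p s a s' = 1) ->
  (forall a, p (sink S) a (sink S) = 1) ->
  (forall a, r (sink S) a (sink S) = 0) ->
  mu (sink S) = 0 ->
  (forall s, s != sink S -> 0 < mu s) ->
  \sum_(s : state S) mu s = 1 ->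
  transient p ->
  exists pistar : {ffun state S -> A},
    (forall s, s != sink S ->
       v_inf_star p r beta s = v_inf p r beta (sd_policy R pistar) s) /\
    g_inf_star p r mu beta = ERM_mu mu beta (v_inf_star p r beta) /\
    ERM_mu mu beta (v_inf_star p r beta) =
      \big[maxe/-oo%E]_(d : {ffun state S -> A})
         ERM_mu mu beta (v_inf p r beta (sd_policy R d)).
Proof.
move=> hb hA hp0 hp1 hpe hre hmue hmupos hmu1 htr.
case/card_gt0P: hA => a0 _.
have hmu0 : forall s, 0 <= mu s.
  move=> s; case: (eqVneq s (sink S)) => [->|hs]; first by rewrite hmue.
  exact: (ltW (hmupos s hs)).
exact: (@main_thm R S A p r a0 beta hb hp0 hp1 hpe hre mu hmu0 hmu1 hmue hmupos htr).
Qed.
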